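(* For $n\ge 1$ let $p_n=\Psi(P_n)$, $m_n=\Psi(M_n)$, $o_n=\Psi(O_n)$, and set $p_0=m_0=o_0=1$. Let $P(x)=\sum_{n\ge0}p_nx^n$, $M(x)=\sum_{n\ge0}m_nx^n$, $O(x)=\sum_{n\ge0}o_nx^n$ be the ordinary generating functions. Then $$P(x)=\frac{1+4x^2}{1-5x+4x^2-4x^3},\qquad M(x)=\frac{1-x-2x^2}{1-6x+3x^2-2x^3},\qquad O(x)=\frac{1+x+x^2}{1-4x-4x^2-x^3}.$$
   Context: All graphs are finite and simple. A matching of a graph $G$ is a set of edges no two of which share a vertex; it is maximal if it is not a proper subset of another matching of $G$. $\Psi(G)$ denotes the number of maximal matchings of $G$ (the empty graph has exactly one, the empty matching). A hexagonal cactus is a connected graph in which every block is a 6-cycle (hexagon). A chain hexagonal cactus is a hexagonal cactus in which each hexagon contains at most two cut-vertices and each cut-vertex is shared by exactly two hexagons; its length is the number of hexagons. In a chain of length $\ge 2$, exactly two hexagons contain one cut-vertex (terminal hexagons); the others contain two (internal hexagons). An internal hexagon is an ortho-, meta- or para-hexagon according as its two cut-vertices are at distance 1, 2 or 3 in the hexagon. $P_n$, $M_n$, $O_n$ denote the (unique up to isomorphism) chain hexagonal cacti of length $n$ all of whose internal hexagons are para-, meta-, resp. ortho-hexagons (for $n\le 2$ these coincide). *)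

(* Defs.v *)
From HB Require Import structures.
From mathcomp Require Import all_boot all_order all_algebra.
Set Implicit Arguments. Unset Strict Implicit. Unset Printing Implicit Defensive.
Import GRing.Theory Num.Theory.

(* A (simple) graph is given by its list E of edges (pairs of nat vertices);
   the vertex set is the set of endpoints.  For the graphs below E has no repeated
   edge, so subsets of indices correspond bijectively to edge subsets. *)

Definition ends (E : seq (nat * nat)) (e : 'I_(size E)) : nat * nat :=
  nth (0, 0) E e.

Definition disjoint_edges (x y : nat * nat) : bool :=
  [&& x.1 != y.1, x.1 != y.2, x.2 != y.1 & x.2 != y.2].

Definition is_matching (E : seq (nat * nat)) (S : {set 'I_(size E)}) : bool :=
  [forall e in S, forall f in S, (e != f) ==> disjoint_edges (ends e) (ends f)].

Definition is_maximal_matching (E : seq (nat * nat)) (S : {set 'I_(size E)}) : bool :=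
  is_matching S && ~~ [exists T : {set 'I_(size E)}, is_matching T && (S \proper T)].

Definition Psi (E : seq (nat * nat)) : nat :=
  #|[set S : {set 'I_(size E)} | is_maximal_matching S]|.

(* Hexagon k (k = 0,1,...) consists of the attachment vertex a_k and the new
   vertices b,...,b+4 with b = 5k+1, forming the 6-cycle
   a_k - b - b+1 - b+2 - b+3 - b+4 - a_k  (a_k at position 0, b+j at position j+1).
   a_0 = 0, and a_(k+1) = 5k+d is the vertex at position d of hexagon k, so
   in every internal hexagon the two cut-vertices are at distance d
   (d = 1 ortho, 2 meta, 3 para). *)
Definition hexagon (d k : nat) : seq (nat * nat) :=
  let a := if k is k'.+1 then 5 * k' + d else 0 in
  let b := 5 * k + 1 in
  [:: (a, b); (b, b.+1); (b.+1, b.+2); (b.+2, b.+3); (b.+3, b.+4); (b.+4, a)].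

Definition hex_chain (d n : nat) : seq (nat * nat) :=
  flatten [seq hexagon d k | k <- iota 0 n].

Definition P_chain (n : nat) := hex_chain 3 n.
Definition M_chain (n : nat) := hex_chain 2 n.
Definition O_chain (n : nat) := hex_chain 1 n.

Definition p_seq (n : nat) : nat := if n is 0 then 1 else Psi (P_chain n).
Definition m_seq (n : nat) : nat := if n is 0 then 1 else Psi (M_chain n).
Definition o_seq (n : nat) : nat := if n is 0 then 1 else Psi (O_chain n).

Definition fps_mul_poly_coef (a : nat -> int) (D : {poly int}) (n : nat) : int :=
  (\sum_(i < n.+1) (D`_i)%R * a (n - i)%N)%R.

(* The formal power series A(x) = sum a_n x^n equals N(x)/D(x), D(0) = 1,
   i.e. A(x) * D(x) = N(x) coefficientwise. *)
Definition ogf_eq_ratio (a : nat -> int) (N D : {poly int}) : Prop :=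
  (D`_0)%R = 1%R /\ forall n : nat, fps_mul_poly_coef a D n = (N`_n)%R.

(* Main.v *)
Require Import Defs.
From HB Require Import structures.
From mathcomp Require Import all_boot all_order all_algebra.
Import GRing.Theory Num.Theory.
Set Implicit Arguments. Unset Strict Implicit.


Definition incE (v : nat) (e : nat*nat) := (e.1 == v) || (e.2 == v).
Definition sel (E : seq (nat*nat)) (s : seq bool) := [seq p.1 | p <- zip E s & p.2].
Definition cov E s v := has (incE v) (sel E s).
Definition satE E s (e : nat * nat) := cov E s e.1 || cov E s e.2.
Definition validL E s := pairwise disjoint_edges (sel E s) && all (satE E s) E.
Fixpoint bseqs m := if m is m'.+1 then flatten [seq [:: true :: s; false :: s] | s <- bseqs m'] else [:: [::]].

Lemma mem_bseqs m s : (s \in bseqs m) = (size s == m).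
Proof.
elim: m s => [|m IH] [|b s] //=.
- apply/negbTE/flattenP; case=> l /mapP [s' _ ->]; by rewrite !inE.
- apply/flattenP/idP => [[l /mapP [s' Hs' ->]]|].
  + by rewrite !inE => /orP [] /eqP [_ ->]; rewrite eqSS -IH.
  + rewrite eqSS -IH => Hs; exists [:: true :: s; false :: s]; first by apply/mapP; exists s.
    by case: b; rewrite !inE eqxx ?orbT.
Qed.

Lemma mem_fl (b : bool) x (l : seq (seq bool)) :
  (b :: x \in flatten [seq [:: true :: s; false :: s] | s <- l]) = (x \in l).
Proof.
elim: l => [|y l IH] //=; rewrite !inE IH !eqseq_cons; move: IH => _.
by case: b => /=; rewrite ?andbF ?orFb ?orbF ?andbT.
Qed.

Lemma uniq_bseqs m : uniq (bseqs m).
Proof.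
elim: m => [|m IH] //=.
elim: (bseqs m) IH => [|s l IHl] //= /andP [sl ul].
by rewrite !inE !mem_fl sl IHl // andbT.
Qed.

Lemma count_sum T (P : pred T) l : count P l = \sum_(s <- l) (P s : nat).
Proof. by elim: l => [|x l IH]; rewrite ?big_nil ?big_cons //= IH. Qed.

Lemma sum_flat (F : seq bool -> nat) l :
  \sum_(s <- flatten [seq [:: true :: x; false :: x] | x <- l]) F s =
  \sum_(x <- l) (F (true::x) + F (false::x)).
Proof. by rewrite big_flatten big_map; apply eq_bigr => x _; rewrite !big_cons big_nil /= addn0. Qed.

Lemma sum_bseqs_cat m1 m2 F :
  \sum_(s <- bseqs (m1+m2)) F s = \sum_(s1 <- bseqs m1) \sum_(t <- bseqs m2) F (s1++t).
Proof.
elim: m1 F => [|m1 IH] F; first by rewrite add0n /= big_cons big_nil /= addn0.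
rewrite addSn /= !sum_flat big_split /= (IH (fun x => F (true :: x))) (IH (fun x => F (false :: x))).
by rewrite -big_split.
Qed.

Lemma pairwise_uniqP (T : eqType) (r : rel T) (l : seq T) : symmetric r -> uniq l ->
  reflect (forall x y, x \in l -> y \in l -> x != y -> r x y) (pairwise r l).
Proof.
move=> rs; elim: l => [|a l IH] /=; first by move=> _; apply: ReflectT.
case/andP=> al ul; apply: (iffP andP).
- case=> /allP H1 /(IH ul) H2 x y; rewrite !inE => /orP [/eqP ->|xl] /orP [/eqP ->|yl];
  rewrite ?eqxx //; [by move=> _; apply: H1 | by move=> _; rewrite rs; apply: H1 | exact: H2].
- move=> H; split.
  + apply/allP => y yl; apply: H; rewrite ?inE ?eqxx ?yl ?orbT //.
    by apply/eqP => ay; move: al; rewrite ay yl.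
  + by apply/(IH ul) => x y xl yl; apply: H; rewrite inE ?xl ?yl orbT.
Qed.

Lemma disj_sym : symmetric disjoint_edges.
Proof. by move=> x y; rewrite /disjoint_edges !(eq_sym x.1) !(eq_sym x.2); case: (_ == _) (_ == _) (_ == _) (_ == _) => [] [] [] []. Qed.

Section Bij.
Variable E : seq (nat * nat).
Local Notation m := (size E).
Local Notation en := (@ends E).
Definition fS (S : {set 'I_m}) : seq bool := [seq i \in S | i <- enum 'I_m].

Lemma E_ends : [seq ends i | i <- enum 'I_m] = E.
Proof.
rewrite /ends (map_comp (nth (0,0) E) val) val_enum_ord.
by rewrite -[RHS](mkseq_nth (0,0)).
Qed.

Lemma sel_fS S : sel E (fS S) = [seq ends i | i <- enum 'I_m & i \in S].
Proof.
rewrite /sel /fS -{1}E_ends zip_map filter_map -map_comp.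
by apply: eq_map.
Qed.

Lemma cov_fS S v : cov E (fS S) v = [exists i in S, incE v (ends i)].
Proof.
rewrite /cov sel_fS; apply/hasP/existsP.
- by case=> e /mapP [i]; rewrite mem_filter => /andP [iS _] -> h; exists i; rewrite iS.
- case=> i /andP [iS h]; exists (ends i) => //; apply/mapP; exists i => //.
  by rewrite mem_filter iS mem_enum.
Qed.

Lemma match_fS S : pairwise disjoint_edges (sel E (fS S)) = is_matching S.
Proof.
have rs : symmetric (relpre (@ends E) disjoint_edges) by move=> x y; rewrite /= disj_sym.
have ul : uniq [seq i <- enum 'I_m | i \in S] by rewrite filter_uniq // enum_uniq.
rewrite /is_matching sel_fS pairwise_map; apply/(pairwise_uniqP rs ul)/idP.
- move=> H; apply/forall_inP => e eS; apply/forall_inP => f fS'; apply/implyP => ef.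
  by apply: H; rewrite // mem_filter ?eS ?fS' mem_enum.
- move=> /forall_inP H x y; rewrite !mem_filter => /andP [xS _] /andP [yS _] xy.
  by move: (H x xS) => /forall_inP /(_ y yS) /implyP; apply.
Qed.
Lemma disjE x y : disjoint_edges x y = ~~ incE x.1 y && ~~ incE x.2 y.
Proof.
rewrite /disjoint_edges /incE !(eq_sym y.1) !(eq_sym y.2).
by case: (_ == _) (_ == _) (_ == _) (_ == _) => [] [] [] [].
Qed.

Lemma satE_fS S i : satE E (fS S) (en i) =
  [exists j in S, incE (en i).1 (en j)] || [exists j in S, incE (en i).2 (en j)].
Proof. by rewrite /satE !cov_fS. Qed.

Lemma maxl_fS S : is_matching S ->
  all (satE E (fS S)) E = ~~ [exists T, is_matching T && (S \proper T)].
Proof.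
move=> mS.
have -> : all (satE E (fS S)) E = all (satE E (fS S)) [seq en i | i <- enum 'I_m] by rewrite E_ends.
rewrite all_map; apply/idP/idP.
- move=> /allP H; apply/negP => /existsP [T /andP [mT /properP [sST [e eT eS]]]].
  have := H e (mem_enum _ e); rewrite /= satE_fS => /orP [] /exists_inP [j jS ij];
  have jT := subsetP sST j jS; have je : j != e by apply: contraNneq eS => <-.
  + by move: mT => /forall_inP /(_ e eT) /forall_inP /(_ j jT) /implyP;
      rewrite eq_sym je disjE ij => /(_ isT).
  + by move: mT => /forall_inP /(_ e eT) /forall_inP /(_ j jT) /implyP;
      rewrite eq_sym je disjE ij andbF => /(_ isT).
- move=> H; apply/allP => i _ /=; apply/negPn/negP => ns; apply: (negP H).
  move: ns; rewrite satE_fS negb_or => /andP [n1 n2].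
  have dj : forall j, j \in S -> disjoint_edges (en i) (en j).
    move=> j jS; rewrite disjE; apply/andP; split.
    + by apply: contra n1 => h; apply/exists_inP; exists j.
    + by apply: contra n2 => h; apply/exists_inP; exists j.
  have iS : i \notin S.
    apply/negP => iS; move: (dj i iS); rewrite disjE /incE !eqxx //.
  apply/existsP; exists (i |: S); apply/andP; split; last by apply: properUr; rewrite sub1set.
  apply/forall_inP => e /setU1P eS; apply/forall_inP => f /setU1P fS'; apply/implyP => ef.
  case: eS => [?|eS]; case: fS' => [?|fS']; subst.
  + by rewrite eqxx in ef.
  + by apply: dj.
  + by rewrite disj_sym; apply: dj.
  + by move: mS => /forall_inP /(_ e eS) /forall_inP /(_ f fS') /implyP; apply.
Qed.
Lemma valid_fS S : validL E (fS S) = is_maximal_matching S.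
Proof.
rewrite /validL /is_maximal_matching match_fS.
by case mS: (is_matching S) => //; rewrite maxl_fS.
Qed.

Lemma fS_inj : injective fS.
Proof.
move=> S T h; apply/setP => i.
have := congr1 (fun s => nth false s i) h.
by rewrite /fS !(nth_map i) -?enumT ?size_enum_ord ?ltn_ord // nth_ord_enum.
Qed.

Lemma perm_fS : perm_eq (bseqs m) [seq fS X | X <- enum {set 'I_m}].
Proof.
apply: uniq_perm; first exact: uniq_bseqs.
  by rewrite map_inj_uniq ?enum_uniq //; exact: fS_inj.
move=> s; rewrite mem_bseqs; apply/eqP/mapP.
- move=> hs; exists [set i : 'I_m | nth false s i]; first by rewrite mem_enum.
  apply: (@eq_from_nth _ false); first by rewrite size_map size_enum_ord hs.
  move=> k; rewrite hs => km.
  by rewrite (nth_map (Ordinal km)) ?size_enum_ord // inE nth_enum_ord.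
- by case=> S _ ->; rewrite size_map size_enum_ord.
Qed.

Lemma Psi_count : Psi E = count (validL E) (bseqs m).
Proof.
rewrite (permP perm_fS) count_map /Psi cardsE cardE size_filter -enumT.
by apply: eq_count => S; rewrite /= valid_fS.
Qed.
End Bij.

Lemma mem_sel E s e : e \in sel E s -> e \in E.
Proof.
elim: E s => [|x E IH] [|b s] //=.
rewrite inE; case: b; rewrite /sel /= -/(sel E s) ?inE.
- by case/orP => [->//|/IH ->]; rewrite orbT.
- by move=> /IH ->; rewrite orbT.
Qed.

Lemma sel_cat E1 E2 s1 s2 : size s1 = size E1 ->
  sel (E1 ++ E2) (s1 ++ s2) = sel E1 s1 ++ sel E2 s2.
Proof. by move=> h; rewrite /sel zip_cat // filter_cat map_cat. Qed.

Lemma cov_cat E1 E2 s1 s2 v : size s1 = size E1 ->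
  cov (E1 ++ E2) (s1 ++ s2) v = cov E1 s1 v || cov E2 s2 v.
Proof. by move=> h; rewrite /cov sel_cat // has_cat. Qed.

Definition allsat E s := all (satE E s) E.
Definition allsatm E s a := all (fun e => satE E s e || incE a e) E.
Definition mat E s := pairwise disjoint_edges (sel E s).
Definition st E s a : nat :=
  if ~~ mat E s then 3 else if ~~ allsatm E s a then 3 else
  if cov E s a then (if allsat E s then 0 else 3) else if allsat E s then 1 else 2.

Definition Hfull H t (c1 : bool) a :=
  all (fun h => cov H t h.1 || cov H t h.2 || (c1 && incE a h)) H.
Definition Hmod H t (c1 : bool) a a' :=
  all (fun h => cov H t h.1 || cov H t h.2 || (c1 && incE a h) || incE a' h) H.
Definition Fst (sg : nat) H t a a' :=
  let c1 := sg == 0 in let S1 := sg <= 1 in let S1a := sg <= 2 in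
  let cHa := cov H t a in
  if ~~ [&& S1a, mat H t, ~~ (c1 && cHa) & (if cHa then S1a else S1)] then 3
  else if cov H t a' then (if Hfull H t c1 a then 0 else 3)
  else if Hfull H t c1 a then 1 else if Hmod H t c1 a a' then 2 else 3.

Section Cat.
Variables (E1 H : seq (nat * nat)) (s1 t : seq bool) (a a' B : nat).
Hypothesis hs1 : size s1 = size E1.
Hypothesis hE1 : forall e, e \in E1 -> (e.1 <= B) && (e.2 <= B).
Hypothesis hH : forall h, h \in H -> ((h.1 == a) || (B < h.1)) && ((h.2 == a) || (B < h.2)).
Hypothesis ha' : B < a'.

Lemma cov1_big v : B < v -> cov E1 s1 v = false.
Proof.
move=> Bv; apply/negP => /hasP [e /mem_sel /hE1 /andP [e1 e2]].
by rewrite /incE => /orP [] /eqP ev; move: Bv; rewrite -ev ltnNge ?e1 ?e2.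
Qed.

Lemma covH_small v : v <= B -> cov H t v = (v == a) && cov H t a.
Proof.
move=> vB; case: (eqVneq v a) => [->//|va]; apply/negP => /hasP [h /mem_sel /hH].
case/andP => h1 h2; rewrite /incE => /orP [] /eqP hv; subst v.
- by move: h1; rewrite (negbTE va) /= ltnNge vB.
- by move: h2; rewrite (negbTE va) /= ltnNge vB.
Qed.

Lemma cov1_H v : (v == a) || (B < v) -> cov E1 s1 v = (v == a) && cov E1 s1 a.
Proof.
case/orP => [/eqP ->|Bv]; first by rewrite eqxx.
rewrite cov1_big //; case: eqP => // va; by rewrite -va cov1_big. Qed.

Lemma covH_E1 v : v <= B -> cov H t v = (v == a) && cov H t a.
Proof. exact: covH_small. Qed.

Lemma cross : allrel disjoint_edges (sel E1 s1) (sel H t) = ~~ (cov E1 s1 a && cov H t a).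
Proof.
apply/allrelP/idP.
- move=> D; apply/negP => /andP [/hasP [e es ea] /hasP [h hs ha]].
  by move: (D e h es hs); rewrite disjE; case/orP: ea => /eqP ->; rewrite ha ?andbF.

- move=> N e h es hs; rewrite disjE.
  have /andP [e1 e2] := hE1 (mem_sel es).
  have hh : forall v, v <= B -> incE v h -> (v == a) && cov H t a.
    move=> v vB vh; rewrite -covH_small //; apply/hasP; by exists h.
  have he : forall v, incE v e -> cov E1 s1 v.
    move=> v ve; apply/hasP; by exists e.
  apply/andP; split; apply/negP => /[dup] X /hh.
  + move=> /(_ e1) /andP [/eqP ea ca]; move: N; rewrite ca andbT -ea he //.
    by rewrite /incE eqxx.
  + move=> /(_ e2) /andP [/eqP ea ca]; move: N; rewrite ca andbT -ea he //.
    by rewrite /incE eqxx orbT.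
Qed.
Lemma mat_cat : mat (E1 ++ H) (s1 ++ t) =
  [&& mat E1 s1, mat H t & ~~ (cov E1 s1 a && cov H t a)].
Proof. by rewrite /mat sel_cat // pairwise_cat cross andbC andbA andbC. Qed.

Lemma satE1 e : e \in E1 -> satE (E1 ++ H) (s1 ++ t) e =
   satE E1 s1 e || (incE a e && cov H t a).
Proof.
move=> /hE1 /andP [e1 e2]; rewrite /satE !cov_cat // (covH_small e1) (covH_small e2) /incE.
by case: (cov E1 s1 e.1) (cov E1 s1 e.2) (e.1 == a) (e.2 == a) (cov H t a) => [] [] [] [] [].
Qed.

Lemma satEH h : h \in H -> satE (E1 ++ H) (s1 ++ t) h =
   cov H t h.1 || cov H t h.2 || (cov E1 s1 a && incE a h).
Proof.
move=> /hH /andP [h1 h2]; rewrite /satE !cov_cat // (cov1_H h1) (cov1_H h2) /incE.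
by case: (cov H t h.1) (cov H t h.2) (h.1 == a) (h.2 == a) (cov E1 s1 a) => [] [] [] [] [].
Qed.

Lemma inc'E1 e : e \in E1 -> incE a' e = false.
Proof.
move=> /hE1 /andP [e1 e2]; rewrite /incE; apply/negbTE; rewrite negb_or.
by apply/andP; split; apply/eqP => ea; move: ha'; rewrite -ea ltnNge ?e1 ?e2.
Qed.

Lemma allE1 : all (fun e => satE E1 s1 e || (incE a e && cov H t a)) E1 =
  if cov H t a then allsatm E1 s1 a else allsat E1 s1.
Proof.
by case: (cov H t a); apply: eq_all => e; rewrite ?andbT ?andbF ?orbF.
Qed.

Lemma st_cat : st (E1 ++ H) (s1 ++ t) a' = Fst (st E1 s1 a) H t a a'.
Proof.
have sat_new : allsat (E1 ++ H) (s1 ++ t) =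
    (if cov H t a then allsatm E1 s1 a else allsat E1 s1) && Hfull H t (cov E1 s1 a) a.
  rewrite /allsat all_cat -allE1; congr (_ && _); apply: eq_in_all => e eH.
    by rewrite satE1.
  by rewrite satEH.
have satm_new : allsatm (E1 ++ H) (s1 ++ t) a' =
    (if cov H t a then allsatm E1 s1 a else allsat E1 s1) && Hmod H t (cov E1 s1 a) a a'.
  rewrite /allsatm all_cat -allE1; congr (_ && _); apply: eq_in_all => e eH.
    by rewrite satE1 // inc'E1 // orbF.
  by rewrite satEH.
have cov_new : cov (E1 ++ H) (s1 ++ t) a' = cov H t a'.
  by rewrite cov_cat // cov1_big.
have r1 : allsat E1 s1 -> allsatm E1 s1 a.
  by move=> /allP A; apply/allP => e eE; rewrite A.
have r2 : cov E1 s1 a -> allsatm E1 s1 a = allsat E1 s1.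
  move=> c; apply: eq_all => e /=; rewrite /satE /incE.
  case: (eqVneq e.1 a) => [->|n1]; first by rewrite c.
  case: (eqVneq e.2 a) => [->|n2]; first by rewrite c orbT.
  by rewrite !orbF.
have r3 : cov H t a' -> Hmod H t (cov E1 s1 a) a a' = Hfull H t (cov E1 s1 a) a.
  move=> c; apply: eq_all => h /=; rewrite /incE.
  case: (eqVneq h.1 a') => [->|n1]; first by rewrite c.
  case: (eqVneq h.2 a') => [->|n2]; first by rewrite c orbT.
  by rewrite !orbF.
have r4 : forall c, Hfull H t c a -> Hmod H t c a a'.
  by move=> c /allP A; apply/allP => h hh; rewrite A.
rewrite /st /Fst mat_cat sat_new satm_new cov_new.
have R1 : allsat E1 s1 ==> allsatm E1 s1 a by apply/implyP.
have R4t : Hfull H t true a ==> Hmod H t true a a' by apply/implyP; apply: r4.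
have R4f : Hfull H t false a ==> Hmod H t false a a' by apply/implyP; apply: r4.
have R2 : cov E1 s1 a ==> (allsatm E1 s1 a == allsat E1 s1) by apply/implyP => c; rewrite r2.
have R3 : cov H t a' ==> (Hmod H t (cov E1 s1 a) a a' == Hfull H t (cov E1 s1 a) a)
  by apply/implyP => c; rewrite r3.
move: R1 R2 R3 R4t R4f; clear.
case: (cov E1 s1 a); case: (mat E1 s1); case: (allsatm E1 s1 a); case: (allsat E1 s1);
case: (mat H t); case: (cov H t a); case: (cov H t a');
case: (Hfull H t _ a); case: (Hmod H t _ a a') => //= [] [] [] [] [].
Qed.

End Cat.

Section Relabel.
Variable g : nat -> nat.
Hypothesis ginj : injective g.
Definition gg (e : nat * nat) := (g e.1, g e.2).

Lemma sel_map H t : sel (map gg H) t = map gg (sel H t).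
Proof.
elim: H t => [|h H IH] [|b t] //=; move: (IH t); rewrite /sel /=.
by case: b => /= ->.
Qed.

Lemma incE_g v e : incE (g v) (gg e) = incE v e.
Proof. by rewrite /incE /= !(inj_eq ginj). Qed.

Lemma cov_map H t v : cov (map gg H) t (g v) = cov H t v.
Proof. by rewrite /cov sel_map has_map; apply: eq_has => e; rewrite /= incE_g. Qed.

Lemma disj_g x y : disjoint_edges (gg x) (gg y) = disjoint_edges x y.
Proof. by rewrite /disjoint_edges /= !(inj_eq ginj). Qed.

Lemma pairwise_g l : pairwise disjoint_edges (map gg l) = pairwise disjoint_edges l.
Proof.
elim: l => [|x l IH] //=; rewrite IH all_map; congr (_ && _).
by apply: eq_all => y; rewrite /= disj_g.
Qed.

Lemma Hfull_map H t c a : Hfull (map gg H) t c (g a) = Hfull H t c a.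
Proof. by rewrite /Hfull all_map; apply: eq_all => h /=; rewrite !cov_map incE_g. Qed.

Lemma Hmod_map H t c a a' : Hmod (map gg H) t c (g a) (g a') = Hmod H t c a a'.
Proof. by rewrite /Hmod all_map; apply: eq_all => h /=; rewrite !cov_map !incE_g. Qed.

Lemma Fst_map sg H t a a' : Fst sg (map gg H) t (g a) (g a') = Fst sg H t a a'.
Proof. by rewrite /Fst /mat sel_map pairwise_g !cov_map Hfull_map Hmod_map. Qed.
End Relabel.

From mathcomp Require Import zify.

Definition ak d k := if k is k'.+1 then 5*k'+d else 0.
Definition gk d k j := if j == 0 then ak d k else 5*k + j.
Definition hexP := [:: (0,1);(1,2);(2,3);(3,4);(4,5);(5,0)].

Lemma hexagon_map d k : hexagon d k = map (gg (gk d k)) hexP.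
Proof. by rewrite /hexagon /gk /gg /= !addnS. Qed.

Lemma ak_le d k : d <= 5 -> ak d k <= 5 * k.
Proof. by case: k => [|k] //= d5; lia. Qed.

Lemma gk_inj d k : d <= 5 -> injective (gk d k).
Proof.
move=> d5 x y; have := ak_le k d5; rewrite /gk.
case: eqP => [->|x0]; case: eqP => [->|y0] //; lia.
Qed.

Lemma hex_chain_S d k : hex_chain d k.+1 = hex_chain d k ++ hexagon d k.
Proof. rewrite /hex_chain -addn1 iotaD map_cat flatten_cat add0n; congr (_ ++ _); exact: cats0. Qed.

Lemma chain_bound d k : d <= 5 -> forall e, e \in hex_chain d k -> (e.1 <= 5*k) && (e.2 <= 5*k).
Proof.
move=> d5; elim: k => [|k IH] e; first by [].
rewrite hex_chain_S mem_cat => /orP [/IH /andP [h1 h2]|].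
  apply/andP; split; lia.
rewrite hexagon_map => /mapP [h hP ->] /=.
have gle : forall j, j <= 5 -> gk d k j <= 5 * k.+1.
  by move=> j j5; have := ak_le k d5; rewrite /gk; case: eqP => _; lia.
have : all (fun h => (h.1 <= 5) && (h.2 <= 5)) hexP by [].
by move=> /allP /(_ h hP) /andP [p1 p2]; rewrite !gle.
Qed.

Definition N d k sg := count (fun s => st (hex_chain d k) s (ak d k) == sg)
   (bseqs (size (hex_chain d k))).
Definition T d X sg := count (fun t => Fst sg hexP t 0 d == X) (bseqs 6).

Lemma st_lt4 E s a : st E s a < 4.
Proof. by rewrite /st; repeat case: ifP. Qed.

Lemma sum_part (A : Type) (h : A -> nat) (f : nat -> nat) l : (forall x, h x < 4) ->
  \sum_(x <- l) f (h x) = \sum_(i < 4) f i * count (fun x => h x == i) l.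
Proof.
move=> hl; elim: l => [|x l IH].
  by rewrite big_nil big1 // => i _; rewrite muln0.
rewrite big_cons IH /=.
under [in RHS]eq_bigr => i _ do rewrite mulnDr.
rewrite big_split /=; congr (_ + _).
rewrite (bigD1 (Ordinal (hl x))) //= eqxx muln1 big1 ?addn0 // => i ix.
have -> : (h x == i) = false.
  by apply/negbTE; apply: contra ix => /eqP e; apply/eqP/val_inj; rewrite /= e.
by rewrite muln0.
Qed.

Lemma N_S d k X : 0 < d <= 5 -> N d k.+1 X = \sum_(i < 4) T d X i * N d k i.
Proof.
case/andP => d0 d5.
have E0 : gk d k 0 = ak d k by [].
have Ed : gk d k d = ak d k.+1 by rewrite /gk /ak; case: eqP => [e|_] //; lia.
have key : forall s1 t, s1 \in bseqs (size (hex_chain d k)) ->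
    st (hex_chain d k ++ hexagon d k) (s1 ++ t) (ak d k.+1) =
    Fst (st (hex_chain d k) s1 (ak d k)) hexP t 0 d.
  move=> s1 t; rewrite mem_bseqs => /eqP hs.
  rewrite (@st_cat _ _ _ _ (ak d k) _ (5 * k)) //.
  - transitivity (Fst (st (hex_chain d k) s1 (ak d k)) (map (gg (gk d k)) hexP) t (gk d k 0) (gk d k d)); first by rewrite hexagon_map E0 Ed.
    exact: (Fst_map (@gk_inj d k d5)).
  - exact: chain_bound.
  - have hj : forall j, (gk d k j == ak d k) || (5*k < gk d k j).
      case=> [|j]; rewrite /gk /=; first by rewrite eqxx.
      by apply/orP; right; lia.
    by rewrite hexagon_map => h /mapP [h' _ ->] /=; rewrite !hj.
  - rewrite /=; lia.
rewrite /N hex_chain_S size_cat (_ : size (hexagon d k) = 6) // count_sum sum_bseqs_cat.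
rewrite -(@sum_part _ (fun s1 => st (hex_chain d k) s1 (ak d k)) (T d X)); last by move=> x; apply: st_lt4.
rewrite big_seq [RHS]big_seq; apply: eq_bigr => s1 s1B.
by rewrite /T count_sum; apply: eq_bigr => t _; rewrite key.
Qed.


Lemma valid_st E s a : validL E s = (st E s a == 0) || (st E s a == 1).
Proof.
have r1 : allsat E s ==> allsatm E s a.
  by apply/implyP => /allP A; apply/allP => e eE; rewrite A.
rewrite /validL -/(mat E s) -/(allsat E s) /st; move: r1.
by case: (mat E s); case: (allsat E s); case: (allsatm E s a); case: (cov E s a).
Qed.

Lemma count_or2 A (p q : pred A) l : (forall x, ~~ (p x && q x)) ->
  count (fun x => p x || q x) l = count p l + count q l.
Proof.
move=> pq; elim: l => [|x l IH] //=; rewrite IH.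
by move: (pq x); case: (p x); case: (q x) => //= _; rewrite ?addnS ?addSn.
Qed.

Lemma Psi_chain d n : Psi (hex_chain d n) = N d n 0 + N d n 1.
Proof.
rewrite Psi_count /N -count_or2; last by move=> x; case: eqP => // ->.
by apply: eq_count => s; rewrite (valid_st _ _ (ak d n)).
Qed.

Lemma N0 d : (N d 0 0, N d 0 1, N d 0 2, N d 0 3) = (0, 1, 0, 0).
Proof. by []. Qed.

Lemma sum4 (F : nat -> nat) : \sum_(i < 4) F i = F 0 + F 1 + F 2 + F 3.
Proof. by rewrite !big_ord_recr big_ord0 /=. Qed.

Lemma N3_0 k : N 3 k.+1 0 = 2 * N 3 k 0 + 4 * N 3 k 1 + 4 * N 3 k 2 + 0 * N 3 k 3.
Proof.
rewrite N_S // (sum4 (fun i => T _ _ i * N _ k i)).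
have -> : T 3 0 0 = 2 by vm_compute.
have -> : T 3 0 1 = 4 by vm_compute.
have -> : T 3 0 2 = 4 by vm_compute.
have -> : T 3 0 3 = 0 by vm_compute.
by rewrite !addnA.
Qed.

Lemma N3_1 k : N 3 k.+1 1 = 1 * N 3 k 0 + 1 * N 3 k 1 + 0 * N 3 k 2 + 0 * N 3 k 3.
Proof.
rewrite N_S // (sum4 (fun i => T _ _ i * N _ k i)).
have -> : T 3 1 0 = 1 by vm_compute.
have -> : T 3 1 1 = 1 by vm_compute.
have -> : T 3 1 2 = 0 by vm_compute.
have -> : T 3 1 3 = 0 by vm_compute.
by rewrite !addnA.
Qed.

Lemma N3_2 k : N 3 k.+1 2 = 0 * N 3 k 0 + 2 * N 3 k 1 + 2 * N 3 k 2 + 0 * N 3 k 3.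
Proof.
rewrite N_S // (sum4 (fun i => T _ _ i * N _ k i)).
have -> : T 3 2 0 = 0 by vm_compute.
have -> : T 3 2 1 = 2 by vm_compute.
have -> : T 3 2 2 = 2 by vm_compute.
have -> : T 3 2 3 = 0 by vm_compute.
by rewrite !addnA.
Qed.

Lemma N2_0 k : N 2 k.+1 0 = 3 * N 2 k 0 + 4 * N 2 k 1 + 3 * N 2 k 2 + 0 * N 2 k 3.
Proof.
rewrite N_S // (sum4 (fun i => T _ _ i * N _ k i)).
have -> : T 2 0 0 = 3 by vm_compute.
have -> : T 2 0 1 = 4 by vm_compute.
have -> : T 2 0 2 = 3 by vm_compute.
have -> : T 2 0 3 = 0 by vm_compute.
by rewrite !addnA.
Qed.

Lemma N2_1 k : N 2 k.+1 1 = 0 * N 2 k 0 + 1 * N 2 k 1 + 1 * N 2 k 2 + 0 * N 2 k 3.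
Proof.
rewrite N_S // (sum4 (fun i => T _ _ i * N _ k i)).
have -> : T 2 1 0 = 0 by vm_compute.
have -> : T 2 1 1 = 1 by vm_compute.
have -> : T 2 1 2 = 1 by vm_compute.
have -> : T 2 1 3 = 0 by vm_compute.
by rewrite !addnA.
Qed.

Lemma N2_2 k : N 2 k.+1 2 = 2 * N 2 k 0 + 2 * N 2 k 1 + 2 * N 2 k 2 + 0 * N 2 k 3.
Proof.
rewrite N_S // (sum4 (fun i => T _ _ i * N _ k i)).
have -> : T 2 2 0 = 2 by vm_compute.
have -> : T 2 2 1 = 2 by vm_compute.
have -> : T 2 2 2 = 2 by vm_compute.
have -> : T 2 2 3 = 0 by vm_compute.
by rewrite !addnA.
Qed.

Lemma N1_0 k : N 1 k.+1 0 = 2 * N 1 k 0 + 4 * N 1 k 1 + 3 * N 1 k 2 + 0 * N 1 k 3.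
Proof.
rewrite N_S // (sum4 (fun i => T _ _ i * N _ k i)).
have -> : T 1 0 0 = 2 by vm_compute.
have -> : T 1 0 1 = 4 by vm_compute.
have -> : T 1 0 2 = 3 by vm_compute.
have -> : T 1 0 3 = 0 by vm_compute.
by rewrite !addnA.
Qed.

Lemma N1_1 k : N 1 k.+1 1 = 1 * N 1 k 0 + 1 * N 1 k 1 + 1 * N 1 k 2 + 0 * N 1 k 3.
Proof.
rewrite N_S // (sum4 (fun i => T _ _ i * N _ k i)).
have -> : T 1 1 0 = 1 by vm_compute.
have -> : T 1 1 1 = 1 by vm_compute.
have -> : T 1 1 2 = 1 by vm_compute.
have -> : T 1 1 3 = 0 by vm_compute.
by rewrite !addnA.
Qed.

Lemma N1_2 k : N 1 k.+1 2 = 1 * N 1 k 0 + 2 * N 1 k 1 + 1 * N 1 k 2 + 0 * N 1 k 3.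
Proof.
rewrite N_S // (sum4 (fun i => T _ _ i * N _ k i)).
have -> : T 1 2 0 = 1 by vm_compute.
have -> : T 1 2 1 = 2 by vm_compute.
have -> : T 1 2 2 = 1 by vm_compute.
have -> : T 1 2 3 = 0 by vm_compute.
by rewrite !addnA.
Qed.


Lemma Nz d x : N d 0 x = if x == 1 then 1 else 0.
Proof. by case: x => [|[|[|x]]]. Qed.

Lemma p3 n : p_seq n = N 3 n 0 + N 3 n 1.
Proof. by case: n => [|n]; rewrite /p_seq ?Psi_chain. Qed.

Lemma p3_rec k : (N 3 k.+3 0 + N 3 k.+3 1) + 4 * (N 3 k.+1 0 + N 3 k.+1 1) =
   5 * (N 3 k.+2 0 + N 3 k.+2 1) + 4 * (N 3 k 0 + N 3 k 1).
Proof. do 3 rewrite ?N3_0 ?N3_1 ?N3_2. lia. Qed.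


Lemma p2 n : m_seq n = N 2 n 0 + N 2 n 1.
Proof. by case: n => [|n]; rewrite /m_seq ?Psi_chain. Qed.

Lemma p2_rec k : (N 2 k.+3 0 + N 2 k.+3 1) + 3 * (N 2 k.+1 0 + N 2 k.+1 1) = 6 * (N 2 k.+2 0 + N 2 k.+2 1) + 2 * (N 2 k 0 + N 2 k 1).
Proof. do 3 rewrite ?N2_0 ?N2_1 ?N2_2. lia. Qed.

Lemma p1 n : o_seq n = N 1 n 0 + N 1 n 1.
Proof. by case: n => [|n]; rewrite /o_seq ?Psi_chain. Qed.

Lemma p1_rec k : (N 1 k.+3 0 + N 1 k.+3 1) = 4 * (N 1 k.+2 0 + N 1 k.+2 1) + 4 * (N 1 k.+1 0 + N 1 k.+1 1) + (N 1 k 0 + N 1 k 1).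
Proof. do 3 rewrite ?N1_0 ?N1_1 ?N1_2. lia. Qed.

Local Open Scope ring_scope.

Lemma ogf_gen (a : nat -> int) (D Nn : {poly int}) :
  D`_0 = 1 -> (forall j, D`_j.+4 = 0) -> (forall j, Nn`_j.+3 = 0) ->
  Nn`_0 = a 0%N -> Nn`_1 = a 1%N + D`_1 * a 0%N ->
  Nn`_2 = a 2%N + D`_1 * a 1%N + D`_2 * a 0%N ->
  (forall k, a k.+3 + D`_1 * a k.+2 + D`_2 * a k.+1 + D`_3 * a k = 0) ->
  ogf_eq_ratio a Nn D.
Proof.
move=> D0 D4 N3 e0 e1 e2 rec; split=> // n.
rewrite /fps_mul_poly_coef -(big_mkord xpredT (fun i => D`_i * a (n - i)%N)).
case: n => [|[|[|k]]].
- by rewrite big_nat_recl // big_geq // addr0 D0 mul1r subn0.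
- by rewrite !big_nat_recl // big_geq // addr0 D0 mul1r e1 addrC.
- by rewrite !big_nat_recl // big_geq // addr0 D0 mul1r e2 !addrA; congr (_ + _); rewrite addrC.
- rewrite !big_nat_recl // big1 ?addr0 => [|i _]; last by rewrite D4 mul0r.
  by rewrite N3 D0 mul1r !subSS !subn0 !addrA rec.
Qed.


Lemma partP : ogf_eq_ratio (fun n => (p_seq n)%:Z)
    (1 + 4%:R *: 'X^2) (1 - 5%:R *: 'X + 4%:R *: 'X^2 - 4%:R *: 'X^3).
Proof.
have E n : (p_seq n)%:Z = (N 3 n 0 + N 3 n 1)%N%:Z by rewrite p3.
apply: ogf_gen.
- by rewrite !coefE.
- by move=> j; rewrite !coefE.
- by move=> j; rewrite !coefE.
- by cbv beta; rewrite !E !coefE /=; do 2 rewrite ?N3_0 ?N3_1 ?N3_2 ?Nz /=; lia.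
- by cbv beta; rewrite !E !coefE /=; do 2 rewrite ?N3_0 ?N3_1 ?N3_2 ?Nz /=; lia.
- by cbv beta; rewrite !E !coefE /=; do 2 rewrite ?N3_0 ?N3_1 ?N3_2 ?Nz /=; lia.
- move=> k; cbv beta; rewrite !E !coefE /=; have := p3_rec k; lia.
Qed.

Lemma partM : ogf_eq_ratio (fun n => (m_seq n)%:Z)
    (1 - 'X - 2%:R *: 'X^2) (1 - 6%:R *: 'X + 3%:R *: 'X^2 - 2%:R *: 'X^3).
Proof.
have E n : (m_seq n)%:Z = (N 2 n 0 + N 2 n 1)%N%:Z by rewrite p2.
apply: ogf_gen.
- by rewrite !coefE.
- by move=> j; rewrite !coefE.
- by move=> j; rewrite !coefE.
- by cbv beta; rewrite !E !coefE /=; do 2 rewrite ?N2_0 ?N2_1 ?N2_2 ?Nz /=; lia.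
- by cbv beta; rewrite !E !coefE /=; do 2 rewrite ?N2_0 ?N2_1 ?N2_2 ?Nz /=; lia.
- by cbv beta; rewrite !E !coefE /=; do 2 rewrite ?N2_0 ?N2_1 ?N2_2 ?Nz /=; lia.
- move=> k; cbv beta; rewrite !E !coefE /=; have := p2_rec k; lia.
Qed.

Lemma partO : ogf_eq_ratio (fun n => (o_seq n)%:Z)
    (1 + 'X + 'X^2) (1 - 4%:R *: 'X - 4%:R *: 'X^2 - 'X^3).
Proof.
have E n : (o_seq n)%:Z = (N 1 n 0 + N 1 n 1)%N%:Z by rewrite p1.
apply: ogf_gen.
- by rewrite !coefE.
- by move=> j; rewrite !coefE.
- by move=> j; rewrite !coefE.
- by cbv beta; rewrite !E !coefE /=; do 2 rewrite ?N1_0 ?N1_1 ?N1_2 ?Nz /=; lia.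
- by cbv beta; rewrite !E !coefE /=; do 2 rewrite ?N1_0 ?N1_1 ?N1_2 ?Nz /=; lia.
- by cbv beta; rewrite !E !coefE /=; do 2 rewrite ?N1_0 ?N1_1 ?N1_2 ?Nz /=; lia.
- move=> k; cbv beta; rewrite !E !coefE /=; have := p1_rec k; lia.
Qed.

Theorem theorem3p4 :
  ogf_eq_ratio (fun n => (p_seq n)%:Z)
    (1 + 4%:R *: 'X^2) (1 - 5%:R *: 'X + 4%:R *: 'X^2 - 4%:R *: 'X^3) /\
  ogf_eq_ratio (fun n => (m_seq n)%:Z)
    (1 - 'X - 2%:R *: 'X^2) (1 - 6%:R *: 'X + 3%:R *: 'X^2 - 2%:R *: 'X^3) /\
  ogf_eq_ratio (fun n => (o_seq n)%:Z)
    (1 + 'X + 'X^2) (1 - 4%:R *: 'X - 4%:R *: 'X^2 - 'X^3).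
Proof. split; [exact: partP | split; [exact: partM | exact: partO]]. Qed.
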